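(* Let $k$ be an algebraically closed field, $G$ a connected linear algebraic group over $k$, and $V$ an $n$-dimensional algebraic $G$-module with basis $e_1,\ldots,e_n$ and dual basis $z_1,\ldots,z_n$ of $V^*$; identify $V$ with $\mathbb A^n$ via $\sum\gamma_ie_i\mapsto(\gamma_1,\ldots,\gamma_n)$. Let $\rho_{p,q}$ ($1\le p,q\le n$) be the regular functions on $G$ with $g\cdot\bigl(\sum_q\gamma_qe_q\bigr)=\sum_p\bigl(\sum_q\rho_{p,q}(g)\gamma_q\bigr)e_p$. Fix $r,s\in\mathbb N$ and a dominant morphism $\iota\colon\mathbb A^{r,s}\to G$. Let $L$ be an affine linear subvariety of $V$ and $\tau\colon\mathbb A^l\to V$ a morphism whose image is dense in $L$. Let $x_1,\ldots,x_{r+s},y_1,\ldots,y_l$ be the standard coordinates on $\mathbb A^{r+s+l}\supset\mathbb A^{r,s}\times\mathbb A^l$, and set $$f_p:=\sum_{q=1}^n\iota^*(\rho_{p,q})\,\tau^*(z_q)\in k[x_1,\ldots,x_{r+s},x_1^{-1},\ldots,x_r^{-1},y_1,\ldots,y_l],\quad 1\le p\le n,$$ written as $f_p=g_p/h_p$ with $g_p\in k[x_1,\ldots,x_{r+s},y_1,\ldots,y_l]$ and $h_p\in k[x_1,\ldots,x_r]$. In the polynomial ring $k[t,x_1,\ldots,x_{r+s},y_1,\ldots,y_l,z_1,\ldots,z_n]$ ($t$ a new variable), let $\mathcal G$ be a Gröbner basis of the ideal generated by $h_1z_1-g_1,\ldots,h_nz_n-g_n,\,1-h_1\cdots h_nt$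 with respect to a monomial order in which every variable $t,x_i,y_j$ is bigger than every variable $z_p$ (an elimination order for $t,x_1,\ldots,x_{r+s},y_1,\ldots,y_l$, e.g. a lexicographic one). Let $q_1,\ldots,q_m$ be all elements of $\mathcal G$ lying in $k[z_1,\ldots,z_n]$. Then $$\overline{G\cdot L}=\{v\in\mathbb A^n\mid q_1(v)=\cdots=q_m(v)=0\},$$ where the bar denotes Zariski closure in $V=\mathbb A^n$.
   Context: $\mathbb N$ is the set of nonnegative integers; $\mathbb A^{r,s}:=\{(\varepsilon_1,\ldots,\varepsilon_{r+s})\in\mathbb A^{r+s}\mid\varepsilon_1\cdots\varepsilon_r\neq0\}$, identified with an open subset of $\mathbb A^{r+s}$; $\iota^*(\rho_{p,q})\in k[x_1,\ldots,x_{r+s},x_1^{-1},\ldots,x_r^{-1}]$ and $\tau^*(z_q)\in k[y_1,\ldots,y_l]$. $G\cdot L=\{g\cdot v\mid g\in G,\ v\in L\}$. *)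

(* Defs.v *)
From HB Require Import structures.
From mathcomp Require Import all_boot all_algebra.
From mathcomp Require Import mpoly.
Set Implicit Arguments.
Unset Strict Implicit.
Unset Printing Implicit Defensive.
Import GRing.Theory.
Local Open Scope ring_scope.

Definition zclosure (k : fieldType) (m : nat) (X : ('I_m -> k) -> Prop)
  (v : 'I_m -> k) : Prop :=
  forall P : {mpoly k[m]}, (forall w, X w -> P.@[w] = 0) -> P.@[v] = 0.

Definition cvcoord (k : fieldType) (n : nat) (v : 'cV[k]_n) : 'I_n -> k :=
  fun i => v i 0.
Definition mxcoord (k : fieldType) (N : nat) (A : 'M[k]_N) : 'I_(N * N) -> k :=
  fun i => mxvec A 0 i.

Definition GLzero (k : fieldType) (N : nat) (S : {mpoly k[N * N]} -> Prop)
  (A : 'M[k]_N) : Prop :=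
  forall P, S P -> P.@[mxcoord A] = 0.

Definition linear_algebraic_group (k : fieldType) (N : nat)
  (G : 'M[k]_N -> Prop) : Prop :=
  [/\ exists S : {mpoly k[N * N]} -> Prop,
        forall A, G A <-> (A \in unitmx /\ GLzero S A),
      G 1%:M,
      (forall A B, G A -> G B -> G (A *m B)) &
      (forall A, G A -> G (invmx A))].

Definition zconnected (k : fieldType) (N : nat) (G : 'M[k]_N -> Prop) : Prop :=
  forall S1 S2 : {mpoly k[N * N]} -> Prop,
    (forall A, G A -> GLzero S1 A \/ GLzero S2 A) ->
    (forall A, G A -> ~ (GLzero S1 A /\ GLzero S2 A)) ->
    (forall A, G A -> GLzero S1 A) \/ (forall A, G A -> GLzero S2 A).

Definition regular_on (k : fieldType) (N : nat) (G : 'M[k]_N -> Prop)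
  (f : 'M[k]_N -> k) : Prop :=
  exists (P : {mpoly k[N * N]}) (e : nat),
    forall A, G A -> f A = P.@[mxcoord A] / (\det A) ^+ e.

(* algebraic (rational) G-module structure on k^n = V, via the matrix
   coefficients rho_{p,q} w.r.t. the standard basis *)
Definition rational_rep (k : fieldType) (N n : nat) (G : 'M[k]_N -> Prop)
  (rho : 'M[k]_N -> 'M[k]_n) : Prop :=
  [/\ rho 1%:M = 1%:M,
      (forall A B, G A -> G B -> rho (A *m B) = rho A *m rho B) &
      (forall p q, regular_on G (fun A => rho A p q))].

Definition in_Ars (k : fieldType) (r s : nat) (x : 'I_(r + s) -> k) : Prop :=
  forall i : 'I_r, x (lshift s i) != 0.

Definition restr_r (k : fieldType) (r s : nat) (x : 'I_(r + s) -> k)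
  : 'I_r -> k := fun i => x (lshift s i).

Definition regular_Ars (k : fieldType) (r s : nat) (f : ('I_(r + s) -> k) -> k)
  : Prop :=
  exists (P : {mpoly k[r + s]}) (e : nat),
    forall x, in_Ars x -> f x = P.@[x] / (\prod_(i < r) x (lshift s i)) ^+ e.

Definition morphism_Ars_G (k : fieldType) (r s N : nat) (G : 'M[k]_N -> Prop)
  (iota : ('I_(r + s) -> k) -> 'M[k]_N) : Prop :=
  (forall x, in_Ars x -> G (iota x)) /\
  (forall i j, regular_Ars (fun x => iota x i j)).

Definition dominant_Ars_G (k : fieldType) (r s N : nat) (G : 'M[k]_N -> Prop)
  (iota : ('I_(r + s) -> k) -> 'M[k]_N) : Prop :=
  forall A, G A ->
    zclosure (fun w => exists x, in_Ars x /\ w = mxcoord (iota x)) (mxcoord A).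

Definition poly_map (k : fieldType) (l n : nat) (tau : ('I_l -> k) -> 'cV[k]_n)
  : Prop :=
  forall p : 'I_n, exists P : {mpoly k[l]}, forall y, tau y p 0 = P.@[y].

Definition affine_linear (k : fieldType) (n : nat) (L : 'cV[k]_n -> Prop) : Prop :=
  exists (d : nat) (v0 : 'cV[k]_n) (B : 'M[k]_(n, d)),
    forall v, L v <-> exists u : 'cV[k]_d, v = v0 + B *m u.

Definition dense_image_in (k : fieldType) (l n : nat)
  (tau : ('I_l -> k) -> 'cV[k]_n) (L : 'cV[k]_n -> Prop) : Prop :=
  (forall y, L (tau y)) /\
  (forall v, L v ->
     zclosure (fun w => exists y, w = cvcoord (tau y)) (cvcoord v)).

Definition orbit_set (k : fieldType) (N n : nat) (G : 'M[k]_N -> Prop)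
  (rho : 'M[k]_N -> 'M[k]_n) (L : 'cV[k]_n -> Prop) (v : 'cV[k]_n) : Prop :=
  exists A w, G A /\ L w /\ v = rho A *m w.

Definition concat_pt (k : fieldType) (a b : nat) (x : 'I_a -> k) (y : 'I_b -> k)
  : 'I_(a + b) -> k :=
  fun i => match split i with inl j => x j | inr j => y j end.

Definition monomial_order (M : nat) (le : rel 'X_{1..M}) : Prop :=
  [/\ reflexive le, antisymmetric le, transitive le & total le] /\
  (forall m, le (@mnm0 M) m) /\
  (forall a b c, le a b -> le (mnm_add a c) (mnm_add b c)).

Definition lead_mono (k : fieldType) (M : nat) (le : rel 'X_{1..M})
  (f : {mpoly k[M]}) (m : 'X_{1..M}) : Prop :=
  m \in msupp f /\ forall m', m' \in msupp f -> le m' m.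

Definition in_ideal (k : fieldType) (M : nat) (gens : seq {mpoly k[M]})
  (f : {mpoly k[M]}) : Prop :=
  exists c : 'I_(size gens) -> {mpoly k[M]},
    f = \sum_(i < size gens) c i * gens`_i.

Definition groebner_basis (k : fieldType) (M : nat) (le : rel 'X_{1..M})
  (gens Gb : seq {mpoly k[M]}) : Prop :=
  (forall q, q \in Gb -> in_ideal gens q) /\
  (forall f, in_ideal gens f -> f != 0 ->
     exists2 q, q \in Gb &
       exists mq mf, [/\ lead_mono le q mq, lead_mono le f mf & lem mq mf]).

(* variable indices: t = 0, x_i = 1 + i, y_j = 1 + (r+s) + j,
   z_p = 1 + (r+s+l) + p *)

Definition nvars (r s l n : nat) : nat := (r + s + l + n).+1.

Definition bvar (k : fieldType) (r s l n : nat) (i : nat)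
  : {mpoly k[nvars r s l n]} := 'X_(inord i).

Definition var_t (k : fieldType) (r s l n : nat) := @bvar k r s l n 0.
Definition var_z (k : fieldType) (r s l n : nat) (p : 'I_n) :=
  @bvar k r s l n (r + s + l + p).+1.

Definition emb_h (k : fieldType) (r s l n : nat) (h : {mpoly k[r]})
  : {mpoly k[nvars r s l n]} :=
  h \mPo [tuple @bvar k r s l n i.+1 | i < r].
Definition emb_g (k : fieldType) (r s l n : nat) (g : {mpoly k[r + s + l]})
  : {mpoly k[nvars r s l n]} :=
  g \mPo [tuple @bvar k r s l n i.+1 | i < r + s + l].

Definition elim_gens (k : fieldType) (r s l n : nat)
  (g : 'I_n -> {mpoly k[r + s + l]}) (h : 'I_n -> {mpoly k[r]})
  : seq {mpoly k[nvars r s l n]} :=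
  [seq emb_h s l n (h p) * var_z k r s l p - emb_g n (g p) | p <- enum 'I_n]
  ++ [:: 1 - (\prod_(p < n) emb_h s l n (h p)) * var_t k r s l n].

Definition elim_var (r s l n : nat) (i : 'I_(nvars r s l n)) : bool :=
  (i <= r + s + l)%N.

Definition elimination_order (r s l n : nat) (le : rel 'X_{1..nvars r s l n})
  : Prop :=
  forall m m' : 'X_{1..nvars r s l n},
    (exists i, elim_var i /\ (0 < m i)%N) ->
    (forall i, elim_var i -> m' i = 0%N) ->
    le m' m.

Definition only_z (k : fieldType) (r s l n : nat) (q : {mpoly k[nvars r s l n]})
  : Prop :=
  forall m, m \in msupp q -> forall i, elim_var i -> m i = 0%N.

(* evaluation of a polynomial of k[z_1..z_n] (seen in the big ring) at v;
   the eliminated variables are set to 0 (irrelevant for q in k[z]) *)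
Definition z_point (k : fieldType) (r s l n : nat) (v : 'cV[k]_n)
  : 'I_(nvars r s l n) -> k :=
  fun i => match insub (i - (r + s + l).+1)%N with
           | Some p => v p 0
           | None => 0
           end.

(* Main.v *)
Require Import Defs.
From HB Require Import structures.
From mathcomp Require Import all_boot all_algebra.
From mathcomp Require Import mpoly.
From Stdlib Require Import Classical ClassicalEpsilon.
From mathcomp Require Import zify ring fingroup perm.
Import GRing.Theory.

Module Helpers.
Set Implicit Arguments.
Unset Strict Implicit.
Unset Printing Implicit Defensive.

Lemma nat_argmin (a : nat -> nat) (p : nat) :
  exists j, (p < j)%N /\ forall j', (p < j')%N -> (a j <= a j')%N.
Proof.
suff H : forall v j0, (a j0 <= v)%N -> (p < j0)%N ->
  exists j, (p < j)%N /\ forall j', (p < j')%N -> (a j <= a j')%N.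
  exact: (H _ p.+1 (leqnn _) (ltnSn p)).
elim=> [|v IH] j0 Hv Hp.
  by exists j0; split=> // j' _; move: Hv; rewrite leqn0 => /eqP ->.
case: (classic (exists j', (p < j')%N /\ (a j' < a j0)%N)) => [[j' [Hj' Hlt]]|nex].
  by apply: (IH j') => //; rewrite -ltnS; apply: leq_trans Hlt Hv.
exists j0; split=> // j' Hj'; rewrite leqNgt; apply/negP => Hlt.
by apply: nex; exists j'.
Qed.

Lemma mono_subseq1 (a : nat -> nat) :
  exists psi : nat -> nat, (forall i, psi i < psi i.+1)%N /\
     (forall i, a (psi i) <= a (psi i.+1))%N.
Proof.
pose nxt p := proj1_sig (constructive_indefinite_description _ (nat_argmin a p)).
have Hn p : (p < nxt p)%N /\ forall j', (p < j')%N -> (a (nxt p) <= a j')%N.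
  by rewrite /nxt; case: constructive_indefinite_description.
exists (fun i => nxt (iter i nxt 0%N)); split=> i /=.
  by case: (Hn (nxt (iter i nxt 0%N))).
case: (Hn (iter i nxt 0%N)) => H1 H2; apply: H2.
by apply: leq_trans H1 _; case: (Hn (nxt (iter i nxt 0%N))) => /ltnW.
Qed.

Lemma mono_chain (phi : nat -> nat) (b : nat -> nat) :
  (forall i, b (phi i) <= b (phi i.+1))%N ->
  forall i j, (i <= j)%N -> (b (phi i) <= b (phi j))%N.
Proof.
move=> H i j /subnK <-; elim: (j - i)%N => [|d IH] //=.
by rewrite addSn; apply: leq_trans IH (H _).
Qed.

Lemma incr_mono (psi : nat -> nat) : (forall i, psi i < psi i.+1)%N ->
  forall i j, (i <= j)%N -> (psi i <= psi j)%N.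
Proof.
move=> H i j /subnK <-; elim: (j - i)%N => [|d IH] //=.
by rewrite addSn; apply: leq_trans IH (ltnW (H _)).
Qed.

Lemma mono_subseq (K : nat) (f : nat -> nat -> nat) :
  exists phi : nat -> nat, (forall i, phi i < phi i.+1)%N /\
     forall c, (c < K)%N -> forall i, (f c (phi i) <= f c (phi i.+1))%N.
Proof.
elim: K => [|K [phi [Hphi Hc]]].
  by exists id; split=> // i.
have [psi [Hpsi Ha]] := mono_subseq1 (fun i => f K (phi i)).
exists (fun i => phi (psi i)); split=> [i|c].
  apply: leq_trans; [exact: Hphi | exact: incr_mono Hphi _ _ (Hpsi i)].
move=> cK1; have : (c <= K)%N by [].
rewrite leq_eqVlt => /orP[/eqP -> //|cK] i.
by apply: (mono_chain (Hc c cK)); apply: ltnW.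
Qed.

Lemma dickson M (f : nat -> 'X_{1..M}) : exists i j, (i < j)%N /\ lem (f i) (f j).
Proof.
have [phi [Hphi Hc]] := mono_subseq M
   (fun c i => if @insub nat (fun c => (c < M)%N) 'I_M c is Some j then f i j else 0%N).
exists (phi 0%N), (phi 1%N); split => //.
apply/mnm_lepP => i; have := Hc i (ltn_ord i) 0%N.
by rewrite valK.
Qed.

Lemma monomial_order_lem M (le : rel 'X_{1..M}) : monomial_order le ->
  forall a b, lem a b -> le a b.
Proof.
move=> [[r a t tot] [H0 Hc]] x y Hxy.
rewrite -(submK Hxy) -{1}(add0m x); exact: Hc.
Qed.

Lemma monomial_order_wf M (le : rel 'X_{1..M}) : monomial_order le ->
  well_founded (fun a b => le a b && (a != b)).
Proof.
move=> Hmo; have [[Hr Ha Ht Htot] [H0 Hc]] := Hmo.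
set R := fun a b => le a b && (a != b).
have H x : ~ Acc R x -> exists y, R y x /\ ~ Acc R y.
  move=> nx; apply: NNPP => H; apply: nx; constructor => y Hy.
  by apply: NNPP => ny; apply: H; exists y.
move=> a0; apply: NNPP => nacc.
pose T := {x | ~ Acc R x}.
have nxt (x : T) : {y : T | R (sval y) (sval x)}.
  case: x => x nx.
  have [y [Ry ny]] := constructive_indefinite_description _ (H x nx).
  by exists (exist _ y ny).
pose g := fix g (i : nat) : T := if i is i'.+1 then sval (nxt (g i')) else exist _ a0 nacc.
pose f i := sval (g i).
have Rf i : R (f i.+1) (f i) by rewrite /f /=; case: (nxt (g i)).
have lef i j : (i <= j)%N -> le (f j) (f i).
  move/subnK <-; elim: (j - i)%N => [|d IH] /=; first exact: Hr.
  by rewrite addSn; apply: Ht IH; case/andP: (Rf (d + i)%N).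
have [i [j [lij Hl]]] := dickson f.
have := monomial_order_lem Hmo Hl => le1.
have le2 := lef _ _ (ltnW lij).
have eij : f i = f j by apply: Ha; rewrite le1 le2.
have le3 := lef _ _ lij.
case/andP: (Rf i) => le4 /eqP; apply; apply: Ha.
by rewrite le4 eij le3.
Qed.

Local Open Scope ring_scope.

Lemma sum_pick1 (R : nmodType) (T : eqType) (s : seq T) (a : T) (F : T -> R) :
  uniq s -> \sum_(x <- s) (if x == a then F x else 0) = if a \in s then F a else 0.
Proof.
elim: s => [|x s IH] /=; first by rewrite big_nil.
case/andP=> xs us; rewrite big_cons IH // in_cons.
by case: (eqVneq x a) => [<-|nxa] /=; rewrite ?(negbTE xs) ?addr0 ?add0r.
Qed.

Section A.
Variable k : closedFieldType.

Lemma muni_eval m (P : {mpoly k[m.+1]}) (v : 'I_m.+1 -> k) :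
  P.@[v] = (map_poly (meval (fun i => v (widen_ord (leqnSn m) i))) (muni P)).[v ord_max].
Proof.
rewrite muniE mevalE raddf_sum horner_sum /=; apply: eq_bigr => mm _.
rewrite -!mul_polyC rmorphM /= map_polyC map_polyXn /= hornerCM hornerXn.
rewrite mevalZ mevalX.
rewrite big_ord_recr /= -mulrA; congr (_ * (_ * _)).
  by apply: eq_bigr => i _; rewrite mnmE.
Qed.

Lemma muni_coef m (P : {mpoly k[m.+1]}) (mm : 'X_{1..m.+1}) :
  P@_mm = ((muni P)`_(mm ord_max))@_[multinom mm (widen_ord (leqnSn m) i) | i < m].
Proof.
rewrite muniE coef_sum raddf_sum /=.
rewrite (eq_bigr (fun mm' => if mm' == mm then P@_mm' else 0)).
  rewrite sum_pick1 ?msupp_uniq //; case: ifP => //.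
  by rewrite mcoeff_msupp => /negbFE/eqP.
move=> mm' _; rewrite coefZ coefXn.
case: (eqVneq mm' mm) => [->|neq]; first by rewrite !eqxx mulr1 mcoeffZ mcoeffX eqxx mulr1.
case: (eqVneq (mm ord_max) (mm' ord_max)) => e; last by rewrite mulr0 mcoeff0.
rewrite mulr1 mcoeffZ mcoeffX.
case: eqP => e2; last by rewrite mulr0.
exfalso; apply: (negP neq); apply/eqP/mnmP => i.
case: (unliftP ord_max i) => [j ->|->]; last by [].
have := congr1 (fun t : 'X_{1..m} => t j) e2; rewrite !mnmE.
by have -> : lift ord_max j = widen_ord (leqnSn m) j by apply: val_inj; rewrite /= /bump leqNgt ltn_ord.
Qed.



Lemma mpoly_zero m (P : {mpoly k[m]}) : (forall x, P.@[x] = 0) -> P = 0.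
Proof.
elim: m P => [|m IH] P H.
  apply/mpolyP => mm; rewrite mcoeff0.
  have -> : mm = 0%MM by apply/mnmP => -[].
  move: (H (fun _ => 0)); rewrite mevalE.
  rewrite (eq_bigr (fun mm' => P@_mm')); last first.
    by move=> mm' _; rewrite big_ord0 mulr1.
  have z0 (x : 'X_{1..0}) : x = 0%MM by apply/mnmP => -[].
  have := msupp_uniq P; case E: (msupp P) => [|x [|y s]] /= U.
  - by move=> _; apply: memN_msupp_eq0; rewrite E.
  - by rewrite big_seq1 (z0 x).
  - by rewrite (z0 x) (z0 y) in_cons eqxx in U.
have Hp w : map_poly (meval w) (muni P) = 0.
  apply: contraTeq isT => /closed_nonrootP [a]; rewrite /root => na.
  pose v : 'I_m.+1 -> k := fun i => if unlift ord_max i is Some j then w j else a.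
  have := H v; rewrite muni_eval.
  have -> : map_poly (meval (fun i => v (widen_ord (leqnSn m) i))) (muni P)
     = map_poly (meval w) (muni P).
    apply: eq_map_poly => c; apply: meval_eq => i; rewrite /v.
    have -> : widen_ord (leqnSn m) i = lift ord_max i by apply: val_inj; rewrite /= /bump leqNgt ltn_ord.
    by rewrite liftK.
  by rewrite /v unlift_none => e; rewrite e eqxx in na.
have Hc j : (muni P)`_j = 0.
  apply: IH => w; have := congr1 (fun p : {poly k} => p`_j) (Hp w).
  by rewrite coef_map /= coef0.
by apply/mpolyP => mm; rewrite mcoeff0 muni_coef Hc mcoeff0.
Qed.

Lemma mpoly_zero_den m (P D : {mpoly k[m]}) : D != 0 ->
  (forall x, D.@[x] != 0 -> P.@[x] = 0) -> P = 0.
Proof.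
move=> nD H; have : P * D = 0.
  apply: mpoly_zero => x; rewrite mevalM.
  by case: (eqVneq D.@[x] 0) => [->|/H ->]; rewrite ?mulr0 ?mul0r.
by move/eqP; rewrite mulf_eq0 (negbTE nD) orbF => /eqP.
Qed.

Lemma mpoly_nz_point m (P : {mpoly k[m]}) : P != 0 -> exists x, P.@[x] != 0.
Proof.
move=> nP; case: (classic (exists x, P.@[x] != 0)) => // nex.
exfalso; move/eqP: nP; apply; apply: mpoly_zero => x; apply/eqP.
by apply: contraT => nz; apply: False_ind; apply: nex; exists x.
Qed.

Definition hmg a b (Q : {mpoly k[a]}) (u : 'I_a -> {mpoly k[b]})
  (d : {mpoly k[b]}) (D : nat) : {mpoly k[b]} :=
  \sum_(mm <- msupp Q) Q@_mm *: ((\prod_i u i ^+ mm i) * d ^+ (D - mdeg mm)).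

Lemma hmg_eval a b (Q : {mpoly k[a]}) (u : 'I_a -> {mpoly k[b]}) d D x :
  (forall mm, mm \in msupp Q -> mdeg mm <= D)%N -> d.@[x] != 0 ->
  (hmg Q u d D).@[x] = d.@[x] ^+ D * Q.@[fun i => (u i).@[x] / d.@[x]].
Proof.
move=> HD nd; rewrite /hmg raddf_sum [X in _ = _ * X]mevalE mulr_sumr; apply: eq_big_seq => mm Hm.
rewrite /= mevalZ mevalM rmorph_prod /= rmorphXn /=.
rewrite (eq_bigr (fun i => (u i).@[x] ^+ mm i)); last by move=> i _; rewrite rmorphXn.
have -> : \prod_i ((u i).@[x] / d.@[x]) ^+ mm i
   = (\prod_i (u i).@[x] ^+ mm i) / d.@[x] ^+ mdeg mm.
  rewrite (eq_bigr (fun i => (u i).@[x] ^+ mm i * (d.@[x]^-1) ^+ mm i)); last first.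
    by move=> i _; rewrite exprMn.
  by rewrite big_split /= prodrXr -mdegE exprVn.
rewrite expfB_cond; last by rewrite (negbTE nd) add0n HD.
ring.
Qed.
End A.

Section Ideal.
Variable (k : fieldType) (M : nat) (gens : seq {mpoly k[M]}).
Local Notation I := (in_ideal gens).

Lemma I0 : I 0.
Proof. by exists (fun _ => 0); rewrite big1 // => i _; rewrite mul0r. Qed.

Lemma ID f g : I f -> I g -> I (f + g).
Proof.
move=> [c1 ->] [c2 ->]; exists (fun i => c1 i + c2 i).
by rewrite -big_split /=; apply: eq_bigr => i _; rewrite mulrDl.
Qed.

Lemma IM a f : I f -> I (a * f).
Proof.
move=> [c ->]; exists (fun i => a * c i).
by rewrite mulr_sumr; apply: eq_bigr => i _; rewrite mulrA.
Qed.

Lemma IN f : I f -> I (- f).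
Proof. by move=> H; rewrite -mulN1r; apply: IM. Qed.

Lemma IB f g : I f -> I g -> I (f - g).
Proof. by move=> Hf Hg; apply: ID => //; apply: IN. Qed.

Lemma IMr a f : I f -> I (f * a).
Proof. by move=> H; rewrite mulrC; apply: IM. Qed.

Lemma Igen x : x \in gens -> I x.
Proof.
move=> xg; have ix : (index x gens < size gens)%N by rewrite index_mem.
exists (fun i => if i == Ordinal ix then 1 else 0).
rewrite (bigD1 (Ordinal ix)) //= eqxx mul1r big1 ?addr0 ?nth_index //.
by move=> i /negbTE ->; rewrite mul0r.
Qed.

Lemma Isum (T : Type) (r : seq T) (F : T -> {mpoly k[M]}) :
  (forall i, I (F i)) -> I (\sum_(i <- r) F i).
Proof. by move=> H; apply: big_ind => //; [apply: I0 | apply: ID]. Qed.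

Lemma Ieval f (pt : 'I_M -> k) : (forall x, x \in gens -> x.@[pt] = 0) ->
  I f -> f.@[pt] = 0.
Proof.
move=> H [c ->]; rewrite raddf_sum big1 // => i _ /=.
by rewrite mevalM (H (gens`_i)) ?mulr0 //; apply: mem_nth.
Qed.

Definition cong f g := I (f - g).

Lemma cong_refl f : cong f f.
Proof. by rewrite /cong subrr; apply: I0. Qed.

Lemma cong_sym f g : cong f g -> cong g f.
Proof. by rewrite /cong => H; rewrite -opprB; apply: IN. Qed.

Lemma cong_trans f g h : cong f g -> cong g h -> cong f h.
Proof. by rewrite /cong => H1 H2; have := ID H1 H2; rewrite addrA subrK. Qed.

Lemma congM f1 f2 g1 g2 : cong f1 g1 -> cong f2 g2 -> cong (f1 * f2) (g1 * g2).
Proof.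
rewrite /cong => H1 H2.
have -> : f1 * f2 - g1 * g2 = f1 * (f2 - g2) + (f1 - g1) * g2.
  by rewrite mulrBr mulrBl addrA subrK.
by apply: ID; [apply: IM | apply: IMr].
Qed.

Lemma congD f1 f2 g1 g2 : cong f1 g1 -> cong f2 g2 -> cong (f1 + f2) (g1 + g2).
Proof.
rewrite /cong => H1 H2.
have -> : f1 + f2 - (g1 + g2) = (f1 - g1) + (f2 - g2) by rewrite opprD addrACA.
exact: ID.
Qed.

Lemma congX f g j : cong f g -> cong (f ^+ j) (g ^+ j).
Proof.
move=> H; elim: j => [|j IH]; first by rewrite !expr0; apply: cong_refl.
by rewrite !exprS; apply: congM.
Qed.

Lemma cong_prod (T : Type) (r : seq T) (F G : T -> {mpoly k[M]}) :
  (forall i, cong (F i) (G i)) -> cong (\prod_(i <- r) F i) (\prod_(i <- r) G i).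
Proof.
move=> H; elim: r => [|x r IH]; first by rewrite !big_nil; apply: cong_refl.
by rewrite !big_cons; apply: congM.
Qed.

Lemma cong_sum (T : Type) (r : seq T) (F G : T -> {mpoly k[M]}) :
  (forall i, cong (F i) (G i)) -> cong (\sum_(i <- r) F i) (\sum_(i <- r) G i).
Proof.
move=> H; elim: r => [|x r IH]; first by rewrite !big_nil; apply: cong_refl.
by rewrite !big_cons; apply: congD.
Qed.

Lemma congZ c f g : cong f g -> cong (c *: f) (c *: g).
Proof. by rewrite /cong -scalerBr -mul_mpolyC => H; apply: IM. Qed.

Lemma cong_comp m (P : {mpoly k[m]}) (u w : m.-tuple {mpoly k[M]}) :
  (forall i, cong (tnth u i) (tnth w i)) -> cong (P \mPo u) (P \mPo w).
Proof.
move=> H; rewrite !comp_mpolyEX; apply: cong_sum => mm; apply: congZ.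
rewrite !comp_mpolyX; apply: cong_prod => i; exact: congX.
Qed.

End Ideal.

Section Only.
Variable (k : fieldType) (M : nat) (S : pred 'I_M).
Definition onlyP (f : {mpoly k[M]}) :=
  forall m : 'X_{1..M}, m \in msupp f -> forall i, S i -> m i = 0%N.

Lemma onlyD f g : onlyP f -> onlyP g -> onlyP (f + g).
Proof.
move=> Hf Hg m /msuppD_le; rewrite mem_cat => /orP[]; [exact: Hf| exact: Hg].
Qed.

Lemma onlyN f : onlyP f -> onlyP (- f).
Proof. by move=> Hf m; rewrite (perm_mem (msuppN f)); apply: Hf. Qed.

Lemma onlyZ c f : onlyP f -> onlyP (c *: f).
Proof. by move=> Hf m /msuppZ_le; apply: Hf. Qed.



Lemma onlyMM f g : onlyP f -> onlyP g -> onlyP (f * g).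
Proof.
move=> Hf Hg m /msuppM_le /allpairsP [[m1 m2] /= [H1 H2 ->]] i Si.
by rewrite mnmDE (Hf _ H1 _ Si) (Hg _ H2 _ Si).
Qed.

Lemma onlyXm (m : 'X_{1..M}) : (forall i, S i -> m i = 0%N) -> onlyP 'X_[m].
Proof. by move=> H m'; rewrite msuppX mem_seq1 => /eqP ->. Qed.

Lemma onlyC c : onlyP c%:MP.
Proof.
move=> m; rewrite msuppC; case: eqP => // _; rewrite mem_seq1 => /eqP -> i _.
by rewrite mnmE.
Qed.

Lemma only0 : onlyP 0.
Proof. by move=> m; rewrite msupp0. Qed.

Lemma only1 : onlyP 1.
Proof. by move=> m; rewrite msupp1 mem_seq1 => /eqP -> i _; rewrite mnmE. Qed.

Lemma only_sum (T : Type) (r : seq T) (F : T -> {mpoly k[M]}) :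
  (forall i, onlyP (F i)) -> onlyP (\sum_(i <- r) F i).
Proof.
move=> H; apply: big_ind => //; last exact: onlyD.
exact: only0.
Qed.

Lemma only_prod (T : Type) (r : seq T) (F : T -> {mpoly k[M]}) :
  (forall i, onlyP (F i)) -> onlyP (\prod_(i <- r) F i).
Proof.
move=> H; apply: big_ind => //; last exact: onlyMM.
exact: only1.
Qed.

Lemma onlyXn f j : onlyP f -> onlyP (f ^+ j).
Proof.
move=> H; elim: j => [|j IH]; first by rewrite expr0; apply: only1.
by rewrite exprS; apply: onlyMM.
Qed.

Lemma only_eval f (a b : 'I_M -> k) : onlyP f ->
  (forall i, ~~ S i -> a i = b i) -> f.@[a] = f.@[b].
Proof.
move=> Hf Hab; rewrite !mevalE; apply: eq_big_seq => m Hm; congr (_ * _).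
apply: eq_bigr => i _; case: (boolP (S i)) => Si; last by rewrite Hab.
by rewrite (Hf _ Hm _ Si) !expr0.
Qed.

End Only.

Section Red.
Variable (k : fieldType) (M : nat) (le : rel 'X_{1..M}) (S : pred 'I_M).
Hypothesis Hmo : monomial_order le.
Hypothesis Hel : forall m m' : 'X_{1..M},
  (exists i, S i /\ (0 < m i)%N) -> (forall i, S i -> m' i = 0%N) -> le m' m.
Variable (gens Gb : seq {mpoly k[M]}).
Hypothesis HGb : groebner_basis le gens Gb.
Variable zv : 'I_M -> k.
Hypothesis Hz : forall q, q \in Gb -> onlyP S q -> q.@[zv] = 0.

Lemma lead_exists (f : {mpoly k[M]}) : f != 0 -> exists m, lead_mono le f m.
Proof.
have [[Hr Ha Ht Htot] _] := Hmo.
rewrite -msupp_eq0 /lead_mono; elim: (msupp f) => [|x s IH] //= _.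
case: (eqVneq s [::]) => [->|/IH [m [ms Hm]]].
  by exists x; split; rewrite ?mem_seq1 // => m'; rewrite mem_seq1 => /eqP ->.
case: (boolP (le m x)) => Hmx.
  exists x; split; first by rewrite in_cons eqxx.
  move=> m'; rewrite in_cons => /orP[/eqP -> //| /Hm H]; exact: Ht H Hmx.
exists m; split; first by rewrite in_cons ms orbT.
have Hxm : le x m by case/orP: (Htot m x) => // H; rewrite H in Hmx.
by move=> m'; rewrite in_cons => /orP[/eqP -> //| /Hm].
Qed.

Lemma reduce f : in_ideal gens f -> onlyP S f -> f.@[zv] = 0.
Proof.
have [[Hr Ha Ht Htot] [H0 Hc]] := Hmo.
case: (eqVneq f 0) => [-> _ _|nf]; first by rewrite meval0.
have [mf Hmf] := lead_exists nf.
elim/(well_founded_ind (monomial_order_wf Hmo)): mf f nf Hmf => mf IH f nf Hmf If Of.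
have [Hq1 Hq2] := HGb.
have [q qG [mq [mf' [Lq Lf lqf]]]] := Hq2 f If nf.
have emf : mf' = mf.
  by apply: Ha; rewrite (Lf.2 _ Hmf.1) (Hmf.2 _ Lf.1).
subst mf'.
have Omf : forall i, S i -> mf i = 0%N := Of _ Hmf.1.
have Omq : forall i, S i -> mq i = 0%N.
  move=> i Si; move/mnm_lepP: lqf => /(_ i); rewrite Omf // leqn0 => /eqP //.
have Oq : onlyP S q.
  move=> m' Hm' i Si; apply/eqP; rewrite -leqn0 leqNgt; apply/negP => pos.
  have l1 := Lq.2 _ Hm'.
  have l2 : le mq m' by apply: Hel => //; exists i.
  have e : m' = mq by apply: Ha; rewrite l1 l2.
  by move: pos; rewrite e Omq.
have qz := Hz qG Oq.
have Iq := Hq1 q qG.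
pose c := f@_mf / q@_mq.
pose d := (mf - mq)%MM.
pose f' := f - c *: ('X_[d] * q).
have If' : in_ideal gens f'.
  apply: IB => //; rewrite -mul_mpolyC; apply: IM; exact: IM.
have Od : forall i, S i -> d i = 0%N by move=> i Si; rewrite mnmBE Omf.
have Of' : onlyP S f'.
  apply: onlyD => //; apply: onlyN; apply: onlyZ; apply: onlyMM => //.
  exact: onlyXm.
have ev : f.@[zv] = f'.@[zv].
  by rewrite /f' mevalB mevalZ mevalM qz !mulr0 subr0.
rewrite ev; case: (eqVneq f' 0) => [->|nf']; first by rewrite meval0.
have [mf'' Hmf''] := lead_exists nf'.
apply: (IH mf'') => //.
have qnz : q@_mq != 0 by rewrite -mcoeff_msupp; exact: Lq.1.
have dmq : (d + mq)%MM = mf by rewrite submK.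
have Hle : forall m, m \in msupp f' -> le m mf.
  move=> m /msuppB_le; rewrite mem_cat => /orP[/Hmf.2 //|].
  move/msuppZ_le; rewrite mulrC (perm_mem (msuppMX _ _)) => /mapP [m' Hm' ->].
  rewrite -dmq addmC [(d + mq)%MM]addmC; apply: Hc; exact: Lq.2.
rewrite (Hle _ Hmf''.1) /=; apply/eqP => E.
have := Hmf''.1; rewrite E mcoeff_msupp /f' mcoeffB mcoeffZ (mulrC 'X_[d]) -{2}dmq mcoeffMX.
by rewrite /c mulfVK // subrr eqxx.
Qed.
End Red.

Section S1.
Variable (k : fieldType) (r s l n : nat).
Local Notation NV := (nvars r s l n).
Local Notation B := {mpoly k[NV]}.

Lemma bvar_eval i (pt : 'I_NV -> k) : (@bvar k r s l n i).@[pt] = pt (inord i).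
Proof. by rewrite /bvar mevalXU. Qed.

Lemma emb_g_eval (gg : {mpoly k[r + s + l]}) pt :
  (emb_g n gg).@[pt] = gg.@[fun j : 'I_(r+s+l) => pt (inord j.+1)].
Proof.
rewrite /emb_g comp_mpoly_meval; apply: meval_eq => j.
by rewrite tnth_mktuple bvar_eval.
Qed.

Lemma emb_h_eval (hh : {mpoly k[r]}) pt :
  (emb_h s l n hh).@[pt] = hh.@[fun j : 'I_r => pt (inord j.+1)].
Proof.
rewrite /emb_h comp_mpoly_meval; apply: meval_eq => j.
by rewrite tnth_mktuple bvar_eval.
Qed.

Lemma var_z_eval (p : 'I_n) pt : (var_z k r s l p).@[pt] = pt (inord (r + s + l + p).+1).
Proof. exact: bvar_eval. Qed.

Lemma var_t_eval pt : (var_t k r s l n).@[pt] = pt (inord 0).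
Proof. exact: bvar_eval. Qed.

Definition mkpt (t0 : k) (c : 'I_(r + s + l) -> k) (z : 'I_n -> k) : 'I_NV -> k :=
  fun i => if (i : nat) is j.+1 then
     (if @insub nat (fun j => (j < r + s + l)%N) 'I_(r + s + l) j is Some jj then c jj
      else if @insub nat (fun j => (j < n)%N) 'I_n (j - (r + s + l))%N is Some p then z p else 0)
    else t0.

Lemma mkpt_t t0 c z : mkpt t0 c z (inord 0) = t0.
Proof. by rewrite /mkpt inordK. Qed.

Lemma mkpt_c t0 c z (j : 'I_(r + s + l)) : mkpt t0 c z (inord j.+1) = c j.
Proof.
rewrite /mkpt inordK; last by rewrite /nvars; have := ltn_ord j; lia.
by rewrite valK.
Qed.

Lemma mkpt_z t0 c z (p : 'I_n) : mkpt t0 c z (inord (r + s + l + p).+1) = z p.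
Proof.
rewrite /mkpt inordK; last by rewrite /nvars; have := ltn_ord p; lia.
rewrite insubF; last by lia.
have -> : (r + s + l + p - (r + s + l))%N = p by lia.
by rewrite valK.
Qed.

Lemma mkpt_zpoint t0 c (v : 'cV[k]_n) (i : 'I_NV) : ~~ elim_var i ->
  mkpt t0 c (cvcoord v) i = @z_point k r s l n v i.
Proof.
rewrite /elim_var /mkpt /z_point -ltnNge.
case: i => [[|j]] //= Hj Hlt.
rewrite insubF; last by lia.
have -> : (j.+1 - (r + s + l).+1)%N = (j - (r + s + l))%N by lia.
by case: insubP.
Qed.

End S1.

Section S1b.
Variable (k : fieldType) (r s l n : nat).
Local Notation NV := (nvars r s l n).

Lemma z_point_z (v : 'cV[k]_n) (p : 'I_n) :
  @z_point k r s l n v (inord (r + s + l + p).+1) = v p 0.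
Proof.
rewrite /z_point inordK; last by rewrite /nvars; have := ltn_ord p; lia.
have -> : ((r + s + l + p).+1 - (r + s + l).+1)%N = p by lia.
by rewrite valK.
Qed.

Lemma mkpt_h t0 c z (j : 'I_r) :
  @mkpt k r s l n t0 c z (inord j.+1) = c (lshift l (lshift s j)).
Proof. exact: (mkpt_c t0 c z (lshift l (lshift s j))). Qed.

Lemma concat_l (x : 'I_(r + s) -> k) (y : 'I_l -> k) j :
  concat_pt x y (lshift l j) = x j.
Proof. by rewrite /concat_pt -/(unsplit (inl _)) unsplitK. Qed.

Lemma concat_r (x : 'I_(r + s) -> k) (y : 'I_l -> k) j :
  concat_pt x y (rshift (r + s) j) = y j.
Proof. by rewrite /concat_pt -/(unsplit (inr _)) unsplitK. Qed.

Lemma concat_split (c : 'I_(r + s + l) -> k) :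
  concat_pt (fun i => c (lshift l i)) (fun j => c (rshift (r + s) j)) =1 c.
Proof.
move=> j; rewrite /concat_pt; rewrite -{2}(splitK j).
by case: (split j).
Qed.

Lemma restr_concat (x : 'I_(r + s) -> k) y (j : 'I_r) :
  restr_r x j = concat_pt x y (lshift l (lshift s j)).
Proof. by rewrite concat_l. Qed.
End S1b.

Section S3.
Variable k : closedFieldType.

Definition DETp (N : nat) : {mpoly k[N * N]} :=
  \sum_(sg : 'S_N) (-1) ^+ sg *: \prod_(i < N) 'X_(mxvec_index i (sg i)).

Lemma DETp_eval N (A : 'M[k]_N) : (DETp N).@[mxcoord A] = \det A.
Proof.
rewrite /DETp raddf_sum /=; apply: eq_bigr => sg _.
rewrite mevalZ rmorph_prod /=; congr (_ * _); apply: eq_bigr => i _.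
by rewrite mevalXU /mxcoord mxvecE.
Qed.

Lemma common_den (X : Type) (T : finType) b (phi : X -> 'I_b -> k) (C : X -> Prop)
  (f : X -> T -> k) (d : {mpoly k[b]}) :
  (forall t, exists U e, forall x, C x -> f x t = U.@[phi x] / d.@[phi x] ^+ e) ->
  exists (U : T -> {mpoly k[b]}) E, forall t x, C x -> d.@[phi x] != 0 ->
     f x t = (U t).@[phi x] / d.@[phi x] ^+ E.
Proof.
move=> H.
have [U0 HU0] := fin_all_exists (fun t => H t).
have [e0 He0] := fin_all_exists (fun t => HU0 t).
pose E := (\max_t e0 t)%N.
exists (fun t => U0 t * d ^+ (E - e0 t)), E => t x Cx nd.
rewrite He0 // mevalM rmorphXn /=.
have le : (e0 t <= E)%N by apply: leq_bigmax.
have -> : d.@[phi x] ^+ E = d.@[phi x] ^+ (E - e0 t) * d.@[phi x] ^+ e0 t.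
  by rewrite -exprD subnK.
rewrite invfM mulrA -(mulrA _ (_ ^+ (E - e0 t))) divff ?mulr1 //.
by rewrite expf_neq0.
Qed.

Lemma mx_as_poly n (M : 'M[k]_n) (P : {mpoly k[n]}) :
  exists T : {mpoly k[n]}, forall u : 'cV[k]_n, T.@[cvcoord u] = P.@[cvcoord (M *m u)].
Proof.
exists (P \mPo [tuple \sum_(q < n) M p q *: 'X_q | p < n]) => u.
rewrite comp_mpoly_meval; apply: meval_eq => p.
rewrite tnth_mktuple raddf_sum /cvcoord mxE; apply: eq_bigr => q _.
by rewrite /= mevalZ mevalXU.
Qed.
End S3.

Lemma alg_id1 (R : comRingType) (U t H : R) (a b : nat) :
  U * t ^+ b - t ^+ b * t ^+ a * (U * H ^+ a) = (U * t ^+ b) * (1 - (H * t) ^+ a).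
Proof. by rewrite exprMn; ring. Qed.

Section Heart.
Variables (k : closedFieldType) (r s l n : nat).
Variables (g : 'I_n -> {mpoly k[r + s + l]}) (h : 'I_n -> {mpoly k[r]}).
Hypothesis hnz : forall p, h p != 0.
Local Notation NV := (nvars r s l n).
Local Notation B := {mpoly k[NV]}.
Local Notation gens := (elim_gens g h).
Local Notation I := (in_ideal gens).

Let hb p : B := emb_h s l n (h p).
Let gb p : B := emb_g n (g p).
Let zb p : B := var_z k r s l p.
Let tb : B := var_t k r s l n.
Let Hb : B := \prod_p hb p.

Lemma gen_p p : I (hb p * zb p - gb p).
Proof. by apply: Igen; rewrite mem_cat; apply/orP; left; apply/mapP; exists p; rewrite ?mem_enum. Qed.

Lemma gen_t : I (1 - Hb * tb).
Proof. by apply: Igen; rewrite mem_cat mem_seq1 eqxx orbT. Qed.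

Lemma I_powx (x : B) e : I (1 - x) -> I (1 - x ^+ e).
Proof.
move=> H; elim: e => [|e IH]; first by rewrite expr0 subrr; apply: I0.
have -> : 1 - x ^+ e.+1 = (1 - x ^+ e) + x ^+ e * (1 - x) by rewrite exprSr; ring.
by apply: ID => //; apply: IM.
Qed.

Let Hh p : Hb = hb p * \prod_(q | q != p) hb q.
Proof. by rewrite /Hb (bigD1 p). Qed.

Let ab p : B := gb p * (\prod_(q | q != p) hb q) * tb.

Lemma cong_z p : cong gens (zb p) (ab p).
Proof.
rewrite /cong.
have -> : zb p - ab p = zb p * (1 - Hb * tb) + tb * (\prod_(q | q != p) hb q) * (hb p * zb p - gb p).
  rewrite (Hh p) /ab; ring.
by apply: ID; [apply: IM; exact: gen_t | apply: IM; exact: gen_p].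
Qed.

Variable (P : {mpoly k[n]}).
Variable (Fv : ('I_(r + s) -> k) -> ('I_l -> k) -> 'cV[k]_n).
Hypothesis Hfg : forall p x y, in_Ars x ->
  (h p).@[restr_r x] * Fv x y p 0 = (g p).@[concat_pt x y].
Hypothesis HP : forall x y, in_Ars x -> (forall p, (h p).@[restr_r x] != 0) ->
  P.@[cvcoord (Fv x y)] = 0.

Let u p : B := gb p * \prod_(q | q != p) hb q.
Let D := msize P.
Let Q : B := hmg P u Hb D.

Lemma hb_nz p : hb p != 0.
Proof.
have [x' Hx'] := mpoly_nz_point (hnz p).
pose pt : 'I_NV -> k := fun i => if (i : nat) is j.+1 then
   (if @insub nat (fun j => (j < r)%N) 'I_r j is Some jj then x' jj else 0) else 0.
apply/eqP => E; move: Hx'; have := congr1 (meval pt) E.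
rewrite /hb emb_h_eval meval0 => E2.
suff <- : (h p).@[fun j : 'I_r => pt (inord j.+1)] = (h p).@[x'] by rewrite E2 eqxx.
apply: meval_eq => j; rewrite /pt inordK ?valK //.
by rewrite /nvars; have := ltn_ord j; lia.
Qed.

Lemma Hb_nz : Hb != 0.
Proof. by apply/prodf_neq0 => p _; exact: hb_nz. Qed.

Let Pib : B := \prod_(i < r) bvar k r s l n i.+1.

Lemma Pib_nz : Pib != 0.
Proof.
apply/prodf_neq0 => i _; rewrite /bvar -msupp_eq0 msuppX //.
Qed.

Lemma cong_sum_in (T : eqType) (rr : seq T) (F G : T -> B) :
  (forall i, i \in rr -> cong gens (F i) (G i)) ->
  cong gens (\sum_(i <- rr) F i) (\sum_(i <- rr) G i).
Proof.
elim: rr => [|x rr IH] H; first by rewrite !big_nil; apply: cong_refl.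
rewrite !big_cons; apply: congD; first by apply: H; rewrite in_cons eqxx.
by apply: IH => i Hi; apply: H; rewrite in_cons Hi orbT.
Qed.

Lemma Q0 : Q = 0.
Proof.
apply: (mpoly_zero_den (mulf_neq0 Hb_nz Pib_nz)) => pt.
rewrite mevalM mulf_eq0 negb_or => /andP [nH nPi].
pose c := fun j : 'I_(r + s + l) => pt (inord j.+1).
pose x := fun i => c (lshift l i).
pose y := fun j => c (rshift (r + s) j).
have hev p : (hb p).@[pt] = (h p).@[restr_r x].
  by rewrite /hb emb_h_eval; apply: meval_eq.
have gev p : (gb p).@[pt] = (g p).@[concat_pt x y].
  rewrite /gb emb_g_eval; apply: meval_eq => j.
  by rewrite concat_split.
have Ax : in_Ars x.
  move=> i; move: nPi; rewrite /Pib rmorph_prod /= => /prodf_neq0 /(_ i isT).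
  by rewrite bvar_eval.
have nh p : (h p).@[restr_r x] != 0.
  by move: nH; rewrite /Hb rmorph_prod /= => /prodf_neq0 /(_ p isT); rewrite hev.
rewrite /Q hmg_eval //; last by move=> mm Hm; apply: ltnW; apply: msize_mdeg_lt.
suff -> : P.@[fun i => (u i).@[pt] / Hb.@[pt]] = 0 by rewrite mulr0.
rewrite -(HP y Ax nh); apply: meval_eq => p.
rewrite /u mevalM gev -(Hfg p y Ax) (Hh p) mevalM hev /cvcoord.
have nh2 : (\prod_(q | q != p) hb q).@[pt] != 0.
  move: nH; rewrite (Hh p) mevalM mulf_eq0 negb_or => /andP[].
  by [].
by field; rewrite nh2 nh.
Qed.

Lemma heart : I (P \mPo [tuple zb p | p < n]).
Proof.
have c1 : cong gens (P \mPo [tuple zb p | p < n]) (P \mPo [tuple ab p | p < n]).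
  by apply: cong_comp => i; rewrite !tnth_mktuple; apply: cong_z.
have c2 : cong gens (P \mPo [tuple ab p | p < n]) (tb ^+ D * Q).
  rewrite comp_mpolyEX /Q /hmg mulr_sumr; apply: cong_sum_in => mm Hm.
  rewrite comp_mpolyX -scalerAr; apply: congZ.
  rewrite (eq_bigr (fun p => u p ^+ mm p * tb ^+ mm p)); last first.
    by move=> p _; rewrite tnth_mktuple -exprMn.
  rewrite big_split /= prodrXr -mdegE.
  have hD : (mdeg mm <= D)%N by apply: ltnW; apply: msize_mdeg_lt.
  have eD : tb ^+ D = tb ^+ mdeg mm * tb ^+ (D - mdeg mm) by rewrite -exprD subnKC.
  rewrite /cong eD.
  set U := \prod_(i < n) u i ^+ mm i.
  have -> : U * tb ^+ mdeg mm - tb ^+ mdeg mm * tb ^+ (D - mdeg mm) * (U * Hb ^+ (D - mdeg mm))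
     = (U * tb ^+ mdeg mm) * (1 - (Hb * tb) ^+ (D - mdeg mm)).
    exact: alg_id1.
  by apply: IM; apply: I_powx; apply: gen_t.
have := cong_trans c1 c2; rewrite Q0 mulr0 /cong subr0 //.
Qed.
End Heart.

Section S4.
Variables (k : closedFieldType) (N n r s : nat).
Variables (G : 'M[k]_N -> Prop) (rho : 'M[k]_N -> 'M[k]_n).
Variable (iota : ('I_(r + s) -> k) -> 'M[k]_N).
Variable (h : 'I_n -> {mpoly k[r]}).
Hypothesis HG : linear_algebraic_group G.
Hypothesis Hrho : rational_rep G rho.
Hypothesis Hiota : morphism_Ars_G G iota.
Hypothesis Hdom : dominant_Ars_G G iota.
Hypothesis hnz : forall p, h p != 0.

Lemma G_det A : G A -> \det A != 0.
Proof.
case: HG => [[S0 HS0] _ _ _] /HS0 [].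
by rewrite unitmxE unitfE.
Qed.

Let Pip : {mpoly k[r + s]} := \prod_(i < r) 'X_(lshift s i).

Lemma Pip_eval x : Pip.@[x] = \prod_(i < r) x (lshift s i).
Proof. by rewrite /Pip rmorph_prod; apply: eq_bigr => i _; rewrite /= mevalXU. Qed.

Lemma Pip_nz : Pip != 0.
Proof. by apply/prodf_neq0 => i _; rewrite -msupp_eq0 msuppX. Qed.

Let hx p : {mpoly k[r + s]} := h p \mPo [tuple 'X_(lshift s i) | i < r].
Let Hx : {mpoly k[r + s]} := \prod_p hx p.

Lemma hx_eval p x : (hx p).@[x] = (h p).@[restr_r x].
Proof.
rewrite /hx comp_mpoly_meval; apply: meval_eq => i.
by rewrite tnth_mktuple mevalXU.
Qed.

Lemma Hx_nz : Hx != 0.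
Proof.
apply/prodf_neq0 => p _.
have [x' Hx'] := mpoly_nz_point (hnz p).
pose x : 'I_(r + s) -> k := fun i =>
  if @insub nat (fun j => (j < r)%N) 'I_r i is Some j then x' j else 0.
apply/eqP => E; move: Hx'; have := congr1 (meval x) E.
rewrite hx_eval meval0 => E2.
suff <- : (h p).@[restr_r x] = (h p).@[x'] by rewrite E2 eqxx.
by apply: meval_eq => j; rewrite /restr_r /x /= valK.
Qed.

Lemma extend_G' (Pz : {mpoly k[n]}) (w : 'cV[k]_n) :
  (forall x, in_Ars x -> (forall p, (h p).@[restr_r x] != 0) ->
     Pz.@[cvcoord (rho (iota x) *m w)] = 0) ->
  forall A, G A -> Pz.@[cvcoord (rho A *m w)] = 0.
Proof.
move=> V1.
case: Hrho => _ _ Hreg.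
have [U [E HU]] : exists (U : ('I_n * 'I_n)%type -> {mpoly k[N * N]}) E,
  forall t A, G A -> (DETp k N).@[mxcoord A] != 0 ->
     rho A t.1 t.2 = (U t).@[mxcoord A] / (DETp k N).@[mxcoord A] ^+ E.
  apply: (@common_den k _ _ _ (@mxcoord k N) G (fun A t => rho A t.1 t.2) (DETp k N)).
  move=> [p q]; have [P [e He]] := Hreg p q.
  by exists P, e => A GA; rewrite DETp_eval He.
pose Vp p := \sum_q (w q 0) *: U (p, q).
have Hrw A : G A -> forall p,
   (rho A *m w) p 0 = (Vp p).@[mxcoord A] / (DETp k N).@[mxcoord A] ^+ E.
  move=> GA p; rewrite mxE raddf_sum /= mulr_suml; apply: eq_bigr => q _.
  rewrite mevalZ (HU (p, q) A GA); last by rewrite DETp_eval G_det.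
  by rewrite /= mulrC mulrA.
pose dE := DETp k N ^+ E.
pose R := hmg Pz Vp dE (msize Pz).
have HR A : G A -> R.@[mxcoord A] = dE.@[mxcoord A] ^+ msize Pz * Pz.@[cvcoord (rho A *m w)].
  move=> GA; rewrite /R hmg_eval; last first.
  - by rewrite /dE rmorphXn /= DETp_eval expf_neq0 // G_det.
  - by move=> mm Hm; apply: ltnW; apply: msize_mdeg_lt.
  congr (_ * _); apply: meval_eq => p.
  by rewrite /cvcoord Hrw // /dE rmorphXn.
case: Hiota => HiG Hreg'.
have [Ui [Ei HUi]] : exists (Ui : 'I_(N * N) -> {mpoly k[r + s]}) Ei,
  forall ix x, in_Ars x -> Pip.@[x] != 0 ->
     mxcoord (iota x) ix = (Ui ix).@[x] / Pip.@[x] ^+ Ei.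
  have := (@common_den k ('I_(r + s) -> k) 'I_(N * N) (r + s) (fun x => x) (@in_Ars k r s)
     (fun x ix => mxcoord (iota x) ix) Pip).
  apply.
  move=> ix; case/mxvec_indexP: ix => i j.
  have [P [e He]] := Hreg' i j.
  by exists P, e => x Ax; rewrite /mxcoord mxvecE He // Pip_eval.
have PipA x : in_Ars x -> Pip.@[x] != 0.
  by move=> Ax; rewrite Pip_eval; apply/prodf_neq0 => i _; exact: Ax.
pose dP := Pip ^+ Ei.
pose S := hmg R Ui dP (msize R).
have HS x : in_Ars x -> S.@[x] = dP.@[x] ^+ msize R * R.@[mxcoord (iota x)].
  move=> Ax; rewrite /S hmg_eval; last first.
  - by rewrite /dP rmorphXn /= expf_neq0 // PipA.
  - by move=> mm Hm; apply: ltnW; apply: msize_mdeg_lt.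
  congr (_ * _); apply: meval_eq => ix.
  by rewrite HUi ?PipA // /dP rmorphXn.
have S0 : S = 0.
  apply: (mpoly_zero_den (mulf_neq0 Pip_nz Hx_nz)) => x.
  rewrite mevalM mulf_eq0 negb_or => /andP [nPi nH].
  have Ax : in_Ars x.
    by move=> i; move: nPi; rewrite Pip_eval => /prodf_neq0 /(_ i isT).
  have nh p : (h p).@[restr_r x] != 0.
    by move: nH; rewrite /Hx rmorph_prod /= => /prodf_neq0 /(_ p isT); rewrite hx_eval.
  rewrite HS // HR; last exact: HiG.
  transitivity (dP.@[x] ^+ msize R * (dE.@[mxcoord (iota x)] ^+ msize Pz * 0)).
    by congr (_ * (_ * _)); exact: V1.
  by rewrite !mulr0.
have Rim x : in_Ars x -> R.@[mxcoord (iota x)] = 0.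
  move=> Ax; have := HS x Ax; rewrite S0 meval0 => /esym /eqP.
  rewrite mulf_eq0 expf_eq0 /dP rmorphXn /= expf_eq0 (negbTE (PipA x Ax)) !andbF /=.
  by move/eqP.
move=> A GA; have := @Hdom A GA R; rewrite HR //.
move=> H; have {H} : dE.@[mxcoord A] ^+ msize Pz * Pz.@[cvcoord (rho A *m w)] = 0.
  by apply: H => _ [x [Ax ->]]; exact: Rim.
move/eqP; rewrite mulf_eq0 expf_eq0 /dE rmorphXn /= expf_eq0 DETp_eval (negbTE (G_det GA)).
by rewrite !andbF /= => /eqP.
Qed.
End S4.

End Helpers.
Import Helpers.
Local Open Scope ring_scope.

Theorem theorem4 (k : closedFieldType) (N n r s l : nat)
  (G : 'M[k]_N -> Prop) (rho : 'M[k]_N -> 'M[k]_n)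
  (iota : ('I_(r + s) -> k) -> 'M[k]_N)
  (L : 'cV[k]_n -> Prop) (tau : ('I_l -> k) -> 'cV[k]_n)
  (g : 'I_n -> {mpoly k[r + s + l]}) (h : 'I_n -> {mpoly k[r]})
  (le : rel 'X_{1..nvars r s l n}) (Gb : seq {mpoly k[nvars r s l n]}) :
  linear_algebraic_group G ->
  zconnected G ->
  rational_rep G rho ->
  morphism_Ars_G G iota ->
  dominant_Ars_G G iota ->
  affine_linear L ->
  poly_map tau ->
  dense_image_in tau L ->
  (* f_p = g_p / h_p, where f_p = sum_q iota^*(rho_{p,q}) tau^*(z_q) *)
  (forall p, h p != 0) ->
  (forall p (x : 'I_(r + s) -> k) (y : 'I_l -> k), in_Ars x ->
     (h p).@[restr_r x] * (rho (iota x) *m tau y) p 0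
       = (g p).@[concat_pt x y]) ->
  monomial_order le ->
  elimination_order le ->
  groebner_basis le (elim_gens g h) Gb ->
  forall v : 'cV[k]_n,
    zclosure (fun w => exists u, orbit_set G rho L u /\ w = cvcoord u)
             (cvcoord v)
    <-> (forall q, q \in Gb -> only_z q -> q.@[@z_point k r s l n v] = 0).
Proof.
move=> HG _ Hrho Hiota Hdom _ _ Hd hnz Hfg Hmo Hel HGb v.
have [HiG _] := Hiota.
have [Hd1 Hd2] := Hd.
split.
- move=> Hcl q qG Oq.
  have Iq := HGb.1 q qG.
  pose ztup (i : 'I_(nvars r s l n)) : {mpoly k[n]} :=
    if @insub nat (fun j => (j < n)%N) 'I_n (i - (r + s + l).+1)%N is Some p then 'X_p else 0.
  pose Pz := q \mPo [tuple ztup i | i < nvars r s l n].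
  have Pz_eval u : Pz.@[cvcoord u] = q.@[@z_point k r s l n u].
    rewrite comp_mpoly_meval; apply: meval_eq => i.
    rewrite tnth_mktuple /ztup /z_point; case: insubP => [p _ _|_].
      by rewrite mevalXU.
    by rewrite meval0.
  have V1 x y : in_Ars x -> (forall p, (h p).@[restr_r x] != 0) ->
      Pz.@[cvcoord (rho (iota x) *m tau y)] = 0.
    move=> Ax nh; rewrite Pz_eval.
    set F := rho (iota x) *m tau y.
    pose Hv := \prod_p (h p).@[restr_r x].
    have nHv : Hv != 0 by apply/prodf_neq0 => p _; exact: nh.
    pose pt := @mkpt k r s l n Hv^-1 (concat_pt x y) (cvcoord F).
    have -> : q.@[@z_point k r s l n F] = q.@[pt].
      apply: (only_eval Oq) => i ni; rewrite /pt mkpt_zpoint //.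
    apply: (Ieval _ Iq) => gg; rewrite mem_cat => /orP [].
      case/mapP => p _ ->.
      rewrite mevalB mevalM emb_h_eval emb_g_eval var_z_eval /pt mkpt_z.
      have -> : (h p).@[fun j : 'I_r => mkpt Hv^-1 (concat_pt x y) (cvcoord F) (inord j.+1)]
              = (h p).@[restr_r x].
        by apply: meval_eq => j; rewrite mkpt_h concat_l.
      have -> : (g p).@[fun j : 'I_(r + s + l) => mkpt Hv^-1 (concat_pt x y) (cvcoord F) (inord j.+1)]
              = (g p).@[concat_pt x y].
        by apply: meval_eq => j; rewrite mkpt_c.
      by rewrite /cvcoord Hfg // subrr.
    rewrite mem_seq1 => /eqP ->.
    rewrite mevalB meval1 mevalM var_t_eval /pt mkpt_t rmorph_prod /=.
    have -> : \prod_p (emb_h s l n (h p)).@[mkpt Hv^-1 (concat_pt x y) (cvcoord F)] = Hv.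
      apply: eq_bigr => p _; rewrite emb_h_eval; apply: meval_eq => j.
      by rewrite mkpt_h concat_l.
    by rewrite divff // subrr.
  have V2 A y : G A -> Pz.@[cvcoord (rho A *m tau y)] = 0.
    move=> GA; apply: (extend_G' HG Hrho Hiota Hdom hnz) => // x Ax nh.
    exact: V1.
  have V3 A w : G A -> L w -> Pz.@[cvcoord (rho A *m w)] = 0.
    move=> GA Lw; have [T HT] := mx_as_poly (rho A) Pz.
    rewrite -HT; apply: (Hd2 w Lw T) => _ [y ->].
    by rewrite HT; exact: V2.
  rewrite -Pz_eval; apply: Hcl => _ [u [[A [w [GA [Lw ->]]]] ->]].
  exact: V3.
- move=> Hq P HP.
  have HP' x y : in_Ars x -> (forall p, (h p).@[restr_r x] != 0) ->
      P.@[cvcoord (rho (iota x) *m tau y)] = 0.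
    move=> Ax _; apply: HP; exists (rho (iota x) *m tau y); split => //.
    by exists (iota x), (tau y); split; [exact: HiG | split].
  have IP := heart hnz (Fv := fun x y => rho (iota x) *m tau y) Hfg HP'.
  set Pb := P \mPo _ in IP.
  have OPb : onlyP (@elim_var r s l n) Pb.
    rewrite /Pb comp_mpolyEX; apply: only_sum => mm; apply: onlyZ.
    rewrite comp_mpolyX; apply: only_prod => p; apply: onlyXn.
    rewrite tnth_mktuple /var_z /bvar; apply: onlyXm => i.
    rewrite /elim_var mnm1E => Hi; apply/eqP; rewrite eqb0; apply/negP => /eqP E.
    move: Hi; rewrite -E inordK /=; first by lia.
    by rewrite /nvars; have := ltn_ord p; lia.
  have := reduce Hmo Hel HGb Hq IP OPb.
  rewrite /Pb comp_mpoly_meval => <-; apply: meval_eq => p.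
  by rewrite tnth_mktuple var_z_eval z_point_z.
Qed.
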